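(* Assume the capacities satisfy (C1). Let $M_0$ be uniform on $\{1,\dots,N\}$ and $M_1,M_2,\dots$ i.i.d., independent of $M_0$, with $\mathbb P(M_v=m)=\lambda_m/l_N$, $1\le m\le N$, and set $Y_v=\mathbf 1\{\bigcup_{w=0}^{v-1}\{M_v=M_w\}\}$ for $v\ge1$. Then for each $\delta\in(-1/2,1/2)$, $u\ge0$ and $v\le N^{1/2+\delta}$, $$\mathbb P\Big(\sum_{w=1}^vY_w\ge N^u\Big)=O\big(N^{-(u-2\delta)}\big).$$
   Context: Capacities $\lambda_1,\dots,\lambda_N>0$ deterministic; $l_N=\sum_i\lambda_i$, $\mu_N=\frac1N\sum_i\lambda_i$, $\nu_N=\sum_i\lambda_i^2/\sum_i\lambda_i$. (C1): there are $\mu\in(0,\infty)$, $\nu\in(1,\infty)$, $\alpha_1>0$ with $|\mu_N-\mu|=O(N^{-\alpha_1})$ and $|\nu_N-\nu|=O(N^{-\alpha_1})$. *)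

(* Defs.v *)
From HB Require Import structures.
From mathcomp Require Import all_boot all_order all_algebra.
From mathcomp Require Import all_classical all_reals.
From mathcomp Require Import exp.
Set Implicit Arguments. Unset Strict Implicit. Unset Printing Implicit Defensive.
Import Order.TTheory GRing.Theory Num.Theory.
Local Open Scope ring_scope.

Section Defs.
Variable R : realType.
(* Capacities: for each N, lam N i (i < N) is the capacity lambda_{i+1}
   (indices shifted to 0..N-1). *)
Variable lam : nat -> nat -> R.

Definition l_N (N : nat) : R := \sum_(i < N) lam N i.
Definition mu_N (N : nat) : R := l_N N / N%:R.
Definition nu_N (N : nat) : R := (\sum_(i < N) lam N i ^+ 2) / l_N N.

(* Condition (C1), with O(.) read as: bounded by C * N^{-alpha1} for all
   large N. *)
Definition C1 : Prop :=
  exists (mu nu alpha1 : R), 0 < mu /\ 1 < nu /\ 0 < alpha1 /\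
    exists (C : R) (N0 : nat), forall N : nat, (N0 <= N)%N ->
      `|mu_N N - mu| <= C * (N%:R `^ (- alpha1)) /\
      `|nu_N N - nu| <= C * (N%:R `^ (- alpha1)).

(* A realisation (M_0, ..., M_v) of the first v+1 marks, values in 'I_N. *)
Definition Yind (N v : nat) (m : {ffun 'I_v.+1 -> 'I_N}) (w : 'I_v.+1) : nat :=
  [exists w' : 'I_v.+1, (w' < w)%N && (m w' == m w)].

Definition Ysum (N v : nat) (m : {ffun 'I_v.+1 -> 'I_N}) : nat :=
  (\sum_(w < v.+1 | (0 < w)%N) Yind m w)%N.

(* Probability of the realisation m: M_0 uniform on N points, M_1..M_v
   i.i.d. with P(M = i) = lam N i / l_N, all independent. *)
Definition path_weight (N v : nat) (m : {ffun 'I_v.+1 -> 'I_N}) : R :=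
  (N%:R)^-1 * \prod_(w < v.+1 | (0 < w)%N) (lam N (m w) / l_N N).

Definition collision_prob (N v : nat) (u : R) : R :=
  \sum_(m : {ffun 'I_v.+1 -> 'I_N} | N%:R `^ u <= (Ysum m)%:R) path_weight m.
End Defs.

(* Main.v *)
Require Import Defs.
From HB Require Import structures.
From mathcomp Require Import all_boot all_order all_algebra.
From mathcomp Require Import all_classical all_reals.
From mathcomp Require Import exp.
From mathcomp Require Import ring lra zify.
Import Order.TTheory GRing.Theory Num.Theory.
Local Open Scope ring_scope.

Lemma prod_if1 (R : realType) (I : finType) (a : I) (X : I -> R) :
  \prod_(i : I) (if i == a then X i else 1) = X a.
Proof. by rewrite -big_mkcond big_pred1_eq. Qed.

Lemma marg (R : realType) (I J : finType) (F : I -> J -> R) (a b : I)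
  (ab : a != b) (H1 : forall i, i != a -> i != b -> \sum_k F i k = 1) :
  \sum_(f : {ffun I -> J}) (f a == f b)%:R * \prod_i F i (f i)
  = \sum_j F a j * F b j.
Proof.
pose G := fun (j : J) (i : I) (k : J) => F i k * (if i == a then (k == j)%:R else 1)
                 * (if i == b then (k == j)%:R else 1).
have E : forall f : {ffun I -> J}, (f a == f b)%:R * \prod_i F i (f i)
   = \sum_j \prod_i G j i (f i).
  move=> f; rewrite /G /=.
  under [in RHS]eq_bigr => j _ do rewrite big_split /= big_split /=.
  under [in RHS]eq_bigr => j _ do rewrite (@prod_if1 _ _ a (fun i => (f i == j)%:R)) (@prod_if1 _ _ b (fun i => (f i == j)%:R)).
  rewrite (bigD1 (f a)) //= eqxx mulr1 [X in _ + X]big1 ?addr0.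
    by rewrite eq_sym mulrC.
  by move=> j /negbTE; rewrite eq_sym => ->; rewrite mulr0 mul0r.
rewrite (eq_bigr _ (fun f _ => E f)) exchange_big /=.
apply: eq_bigr => j _.
rewrite -(bigA_distr_bigA (G j)) (bigD1 a) //= (bigD1 b) 1?eq_sym //=.
rewrite [X in _ * (_ * X)]big1 ?mulr1.
  rewrite /G eqxx (negbTE ab) eq_sym (negbTE ab) eqxx.
  rewrite (bigD1 j) //= big1 ?addr0; last first.
    by move=> k /negbTE ->; rewrite mulr0 mulr1.
  rewrite (bigD1 j) //= big1 ?addr0; last first.
    by move=> k /negbTE ->; rewrite mulr0.
  by rewrite eqxx !mulr1.
move=> i /andP[ia ib]; rewrite /G (negbTE ia) (negbTE ib).
under eq_bigr do rewrite !mulr1.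
exact: H1.
Qed.


Lemma eventually_small (R : realType) (C al eps : R) : 0 < al -> 0 < eps ->
  exists N1 : nat, (0 < N1)%N /\
    forall N : nat, (N1 <= N)%N -> C * N%:R `^ (- al) <= eps.
Proof.
move=> al0 e0.
pose B := (`|C| / eps) `^ (al^-1).
exists (Num.Def.archi_bound B).+1; split => // N hN.
have hB : B < N%:R.
  apply: lt_le_trans (archi_boundP (powR_ge0 _ _)) _.
  by rewrite ler_nat; exact: leq_trans (leqnSn _) hN.
have N0 : 0 < N%:R :> R by apply: le_lt_trans hB; exact: powR_ge0.
have hNa : `|C| / eps <= N%:R `^ al.
  have -> : `|C| / eps = B `^ al.
    by rewrite /B -powRrM mulVf ?gt_eqF // powRr1 // divr_ge0 // ltW.
  apply: ge0_ler_powR; rewrite ?nnegrE; [exact: ltW | exact: powR_ge0 | exact: ltW | exact: ltW].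
have Na0 : 0 < N%:R `^ al by apply: powR_gt0.
rewrite powRN.
apply: le_trans (ler_wpM2r _ (ler_norm C)) _; first by rewrite invr_ge0 ltW.
rewrite -/(_ / _) ler_pdivrMr //.
by rewrite -ler_pdivrMl // mulrC.
Qed.


Lemma count_lt (n w : nat) : (\sum_(i < n | (i < w)%N) 1 <= minn n w)%N.
Proof.
rewrite -(big_mkord (fun i => (i < w)%N) (fun _ => 1%N)).
elim: n => [|n IH]; first by rewrite big_geq.
rewrite big_mkcond big_nat_recr //= -big_mkcond.
case: ltnP => h /=; lia.
Qed.

Lemma count_pos (v : nat) : (\sum_(i < v.+1 | (0 < i)%N) 1 = v)%N.
Proof.
rewrite big_mkcond big_ord_recl /=.

by rewrite add0n sum1_card card_ord.
Qed.

Lemma Ysum_le (N v : nat) (m : {ffun 'I_v.+1 -> 'I_N}) :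
  (Ysum m <= \sum_(w < v.+1 | (0 < w)%N) \sum_(w' < v.+1 | (w' < w)%N) (m w' == m w))%N.
Proof.
apply: leq_sum => w _.
rewrite /Yind; case: existsP => [[w' /andP[h1 h2]] | _] //=.
by rewrite (bigD1 w') //= h2.
Qed.

Theorem lemmaD3 (R : realType) (lam : nat -> nat -> R)
  (Hpos : forall (N i : nat), (i < N)%N -> 0 < lam N i)
  (HC1 : C1 lam) (delta u : R)
  (Hdelta : - (1 / 2) < delta < 1 / 2) (Hu : 0 <= u) :
  exists (C : R) (N0 : nat), forall N v : nat, (N0 <= N)%N ->
    v%:R <= N%:R `^ (1 / 2 + delta) ->
    collision_prob lam N v u <= C * N%:R `^ (- (u - 2 * delta)).
Proof.
move: HC1 => [mu [nu [al [mu0 [nu1 [al0 [C [N0 HC]]]]]]]].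
pose eps := Num.min 1 (mu / 2).
have eps0 : 0 < eps by rewrite lt_min ltr01 divr_gt0.
have : eps <= Num.min 1 (mu / 2) := lexx _.
rewrite le_min => /andP[e1 e2].
have [N1 [N1pos HN1]] := @eventually_small R C al eps al0 eps0.
pose K := 1 + 2 * (nu + 1) / mu.
have K1 : 1 <= K.
  by rewrite /K lerDl divr_ge0 ?(ltW mu0) // mulr_ge0 //; lra.
have K0 : 0 < K by apply: lt_le_trans ltr01 K1.
exists K, (maxn N0 N1) => N v hN hv.
have hN0 : (N0 <= N)%N by apply: leq_trans (leq_maxl _ _) hN.
have hN1 : (N1 <= N)%N by apply: leq_trans (leq_maxr _ _) hN.
have Npos : (0 < N)%N by apply: leq_trans N1pos hN1.
have NR : 0 < N%:R :> R by rewrite ltr0n.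
have [Hmu Hnu] := HC N hN0.
have Ce := HN1 N hN1.
have muN : mu / 2 <= mu_N lam N.
  move: Hmu; rewrite ler_norml => /andP[h1 h2]; lra.
have nuN : nu_N lam N <= nu + 1.
  move: Hnu; rewrite ler_norml => /andP[h1 h2]; lra.
have lE : l_N lam N = mu_N lam N * N%:R by rewrite /mu_N divfK // gt_eqF.
have l0 : 0 < l_N lam N by rewrite lE mulr_gt0 //; lra.
pose q (w : 'I_v.+1) (k : 'I_N) : R :=
  if w == ord0 then N%:R^-1 else lam N k / l_N lam N.
have q0 : forall w k, 0 <= q w k.
  move=> w k; rewrite /q; case: ifP => _; first by rewrite invr_ge0 ltW.
  by rewrite divr_ge0 // ltW // Hpos.
have qsum : forall w, \sum_k q w k = 1.
  move=> w; rewrite /q; case: (w == ord0).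
    by rewrite sumr_const card_ord -[LHS]mulr_natr mulVf // gt_eqF.
  by rewrite -mulr_suml mulfV // gt_eqF.
have pwE : forall m : {ffun 'I_v.+1 -> 'I_N}, path_weight lam m = \prod_w q w (m w).
  move=> m; rewrite /path_weight [RHS](bigD1 ord0) //= /q eqxx; congr (_ * _).
  apply: eq_big => [w|w hw]; first by case: w => [[|w] h].
  by case: w hw => [[|w] h].
have pw0 : forall m : {ffun 'I_v.+1 -> 'I_N}, 0 <= path_weight lam m.
  by move=> m; rewrite pwE prodr_ge0.
have KN0 : 0 <= K / N%:R by rewrite divr_ge0 // ltW.
have key : forall a b : 'I_v.+1, (a < b)%N ->
    \sum_(m : {ffun 'I_v.+1 -> 'I_N}) (m a == m b)%:R * path_weight lam m
      <= K / N%:R.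
  move=> a b ab.
  under eq_bigr do rewrite pwE.
  rewrite (@marg R _ _ q a b); first last.
  - by move=> i _ _; apply: qsum.
  - by rewrite neq_ltn ab.
  have bn : (b == ord0) = false.
    by apply/eqP => hb; move: ab; rewrite hb ltn0.
  have qb := qsum b; rewrite /q bn in qb.
  rewrite /q bn; case: (a == ord0).
    rewrite -mulr_sumr qb mulr1 -[X in X <= _]mul1r ler_wpM2r //.
    by rewrite invr_ge0 ltW.
  have -> : \sum_(j < N) lam N j / l_N lam N * (lam N j / l_N lam N)
      = nu_N lam N / l_N lam N.
    rewrite /nu_N !mulr_suml; apply: eq_bigr => j _; rewrite expr2; ring.
  rewrite lE ler_pdivrMr ?mulr_gt0 //; last by rewrite invr_gt0.
  have -> : K / N%:R * (mu_N lam N * N%:R) = K * mu_N lam N.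
    by field; rewrite gt_eqF.
  have KM : K * (mu / 2) = mu / 2 + (nu + 1).
    by rewrite /K; field; rewrite gt_eqF.
  apply: le_trans nuN _.
  apply: le_trans (_ : K * (mu / 2) <= _); first by rewrite KM; lra.
  by rewrite ler_wpM2l // ltW.
have Nu0 : 0 < N%:R `^ u by apply: powR_gt0.
rewrite /collision_prob.
apply: (@le_trans _ _ (\sum_(m : {ffun 'I_v.+1 -> 'I_N})
          path_weight lam m * ((Ysum m)%:R / N%:R `^ u))).
  rewrite big_mkcond /=; apply: ler_sum => m _; case: ifP => h.
    rewrite -[X in X <= _]mulr1 ler_wpM2l // ler_pdivlMr // mul1r //.
  by rewrite mulr_ge0 // divr_ge0 // ltW.
under eq_bigr do rewrite mulrA.
rewrite -mulr_suml.
have cnt : forall (c : R) (P : pred 'I_v.+1),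
    \sum_(i | P i) c = (\sum_(i | P i) 1%N)%:R * c.
  by move=> c P; rewrite natr_sum mulr_suml; apply: eq_bigr => i _; rewrite mul1r.
have S : \sum_(m : {ffun 'I_v.+1 -> 'I_N}) path_weight lam m * (Ysum m)%:R
    <= (v * v)%:R * (K / N%:R).
  apply: (@le_trans _ _ (\sum_(m : {ffun 'I_v.+1 -> 'I_N})
      \sum_(w < v.+1 | (0 < w)%N) \sum_(w' < v.+1 | (w' < w)%N)
         (m w' == m w)%:R * path_weight lam m)).
    apply: ler_sum => m _; rewrite mulrC.
    apply: le_trans (ler_wpM2r (pw0 m) (_ : (Ysum m)%:R <=
      (\sum_(w < v.+1 | (0 < w)%N) \sum_(w' < v.+1 | (w' < w)%N)
         (m w' == m w))%:R)) _; first by rewrite ler_nat Ysum_le.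
    rewrite natr_sum mulr_suml; apply: ler_sum => w _.
    by rewrite natr_sum mulr_suml.
  rewrite exchange_big /=.
  under eq_bigr => w _ do rewrite exchange_big /=.
  apply: (@le_trans _ _ (\sum_(w < v.+1 | (0 < w)%N)
      \sum_(w' < v.+1 | (w' < w)%N) (K / N%:R))).
    by apply: ler_sum => w _; apply: ler_sum => w' hw'; apply: key.
  apply: (@le_trans _ _ (\sum_(w < v.+1 | (0 < w)%N) (v%:R * (K / N%:R)))).
    apply: ler_sum => w _; rewrite cnt; apply: ler_wpM2r => //.
    rewrite ler_nat; apply: leq_trans (count_lt v.+1 w) (leq_trans (geq_minr _ _) _).
    by rewrite -ltnS ltn_ord.
  by rewrite cnt count_pos natrM mulrA.
have vv : (v * v)%:R <= N%:R `^ (1 + 2 * delta) :> R.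
  have v0 : 0 <= v%:R :> R by [].
  rewrite natrM.
  have -> : 1 + 2 * delta = (1 / 2 + delta) + (1 / 2 + delta) by lra.
  rewrite powRD; last by rewrite (gt_eqF NR) implybT.
  by apply: ler_pM.
apply: (@le_trans _ _ (N%:R `^ (1 + 2 * delta) * (K / N%:R) / N%:R `^ u)).
  apply: ler_wpM2r; first by rewrite invr_ge0 ltW.
  apply: le_trans S _.
  by apply: ler_wpM2r.
have -> : - (u - 2 * delta) = (1 + 2 * delta) + (- 1 + - u) by lra.
rewrite (@powRD _ _ (1 + 2 * delta)); last by rewrite (gt_eqF NR) implybT.
rewrite (@powRD _ _ (-1) (-u)); last by rewrite (gt_eqF NR) implybT.
rewrite powR_inv1 ?(ltW NR) // powRN.
rewrite le_eqVlt; apply/orP; left; apply/eqP.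
by field; rewrite !gt_eqF.
Qed.
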